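(* Let $q$ be a prime power and let $R$ be a finite ring containing the field $\mathbb{F}_q$ as a subring. Let $d=\dim_{\mathbb{F}_q}R$ and let $r^*$ be the number of units of $R$. If $B$ is a blocking set of the chain geometry $\Sigma(\mathbb{F}_q,R)$, then \[ \#B\ \ge\ \left\lceil\frac{2q^d-r^*}{q+1}\right\rceil . \]
   Context: All rings are associative with unit element $1\neq 0$, and subrings share the unit. $R^2$ is regarded as a left $R$-module. The projective line $\mathbb{P}(R)$ is the set of all submodules of $R^2$ of the form $R(a,b)$ where $(a\ b)$ is the first row of some invertible $2\times 2$ matrix over $R$. For a field $K\subseteq R$ (as a subring), $\mathbb{P}(K)$ is embedded in $\mathbb{P}(R)$ via $K(a,b)\mapsto R(a,b)$. The chain geometry $\Sigma(K,R)$ has point set $\mathbb{P}(R)$ and its blocks, called chains, are the sets $\mathbb{P}(K)^g$ with $g\in \mathrm{GL}_2(R)$. A blocking set is a set $B$ of points such that every chain contains at least one element of $B$. *)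

(* Defs.v *)
From HB Require Import structures.
From mathcomp Require Import all_boot all_order all_algebra.
Set Implicit Arguments. Unset Strict Implicit. Unset Printing Implicit Defensive.
Import Order.TTheory GRing.Theory Num.Theory.
Local Open Scope ring_scope.

Definition invertible2 (R : nzRingType) (M : 'M[R]_2) : Prop :=
  exists N : 'M[R]_2, M *m N = 1%:M /\ N *m M = 1%:M.

Definition admissible (R : nzRingType) (a b : R) : Prop :=
  exists M : 'M[R]_2, invertible2 M /\ M ord0 ord0 = a /\ M ord0 ord_max = b.

Definition cyc (R : finNzRingType) (a b : R) : {set R * R} :=
  [set (x * a, x * b) | x : R].

Definition is_point (R : finNzRingType) (p : {set R * R}) : Prop :=
  exists a b : R, admissible a b /\ p = cyc a b.

Definition act_point (R : finNzRingType) (a b : R) (g : 'M[R]_2) : {set R * R} :=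
  let w := (\row_(j < 2) (if j == ord0 then a else b)) *m g in
  cyc (w ord0 ord0) (w ord0 ord_max).

(* The chain P(K)^g, K embedded in R via the unital ring morphism f:
   the points R((f a, f b) g) with K(a,b) in P(K). *)
Definition in_chain (K : fieldType) (R : finNzRingType) (f : {rmorphism K -> R})
  (g : 'M[R]_2) (p : {set R * R}) : Prop :=
  exists a b : K, admissible a b /\ p = act_point (f a) (f b) g.

Definition blocking_set (K : fieldType) (R : finNzRingType) (f : {rmorphism K -> R})
  (B : {set {set R * R}}) : Prop :=
  (forall p, p \in B -> is_point p) /\
  (forall g : 'M[R]_2, invertible2 g -> exists2 p, p \in B & in_chain f g p).

Definition left_dim (K : fieldType) (R : finNzRingType) (f : {rmorphism K -> R})
  (d : nat) : Prop :=
  exists s : d.-tuple R,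
    (forall x : R, exists c : 'I_d -> K, x = \sum_(i < d) f (c i) * tnth s i) /\
    (forall c : 'I_d -> K, \sum_(i < d) f (c i) * tnth s i = 0 -> forall i, c i = 0).

Definition nunits (R : finNzRingType) : nat :=
  #|[set x : R | [exists y : R, (x * y == 1) && (y * x == 1)]]|.

(* Main.v *)
Require Import Defs.
From HB Require Import structures.
From mathcomp Require Import all_boot all_order all_algebra.
Import Order.TTheory GRing.Theory Num.Theory.
Set Implicit Arguments. Unset Strict Implicit. Unset Printing Implicit Defensive.
Local Open Scope ring_scope.

Definition vm (R : finNzRingType) (u : R * R) (g : 'M[R]_2) : R * R :=
  (u.1 * g 0 0 + u.2 * g 1 0, u.1 * g 0 1 + u.2 * g 1 1).

Definition ccyc (R : finNzRingType) (u : R * R) := cyc u.1 u.2.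

Definition row0 (R : finNzRingType) (g : 'M[R]_2) : R * R := (g 0 0, g 0 1).

Lemma mulmx2E (R : finNzRingType) m n (g : 'M[R]_(m,2)) (h : 'M[R]_(2,n)) i j :
  (g *m h) i j = g i 0 * h 0 j + g i 1 * h 1 j.
Proof. rewrite mxE !big_ord_recl big_ord0 addr0 /=. have E0 : (lift ord0 ord0 : 'I_2) = 1 by apply: val_inj. by rewrite E0. Qed.

Lemma row0_mul (R : finNzRingType) (g h : 'M[R]_2) :
  row0 (g *m h) = vm (row0 g) h.
Proof. by rewrite /row0 /vm !mulmx2E. Qed.

Lemma vm_mul (R : finNzRingType) (u : R * R) (g h : 'M[R]_2) :
  vm (vm u g) h = vm u (g *m h).
Proof.
rewrite /vm /= !mulmx2E; congr (_, _);
rewrite !mulrDl !mulrDr !mulrA; 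
by rewrite -!addrA; congr (_ + _); rewrite addrCA.
Qed.

Lemma vm_scale (R : finNzRingType) (r : R) (u : R * R) (g : 'M[R]_2) :
  vm (r * u.1, r * u.2) g = (r * (vm u g).1, r * (vm u g).2).
Proof. by rewrite /vm /= !mulrDr !mulrA. Qed.

Lemma act_pointE (R : finNzRingType) (a b : R) g :
  act_point a b g = ccyc (vm (a, b) g).
Proof.
rewrite /act_point /ccyc /vm /= !mulmx2E !mxE /=.
have E0 : (ord0 : 'I_2) = 0 by apply: val_inj.
have E1 : (ord_max : 'I_2) = 1 by apply: val_inj.
by rewrite E0 E1.
Qed.

Lemma in_ccyc (R : finNzRingType) (u w : R * R) :
  (w \in ccyc u) = [exists x, w == (x * u.1, x * u.2)].
Proof.
apply/imsetP/existsP => [[x _ ->]|[x /eqP ->]]; first by exists x.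
by exists x.
Qed.

Lemma ccyc_scale (R : finNzRingType) (r s : R) (u : R * R) :
  s * r = 1 -> ccyc (r * u.1, r * u.2) = ccyc u.
Proof.
move=> sr; apply/setP => w; rewrite !in_ccyc /=.
apply/existsP/existsP => [[x /eqP ->]|[x /eqP ->]].
  by exists (x * r); rewrite !mulrA.
by exists (x * s); rewrite !mulrA -(mulrA x s r) sr mulr1.
Qed.

Lemma ccyc_vm (R : finNzRingType) (u v : R * R) (M : 'M[R]_2) :
  ccyc u = ccyc v -> ccyc (vm u M) = ccyc (vm v M).
Proof.
wlog suff: u v / ccyc u = ccyc v -> ccyc (vm u M) \subset ccyc (vm v M).
  by move=> H E; apply/eqP; rewrite eqEsubset !H.
move=> E; apply/subsetP => w; rewrite !in_ccyc => /existsP[x /eqP ->].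
have : (x * u.1, x * u.2) \in ccyc v by rewrite -E in_ccyc; apply/existsP; exists x.
rewrite in_ccyc => /existsP[y /eqP Exy].
apply/existsP; exists y.
rewrite -vm_scale Exy vm_scale //.
Qed.
Definition GL (R : finNzRingType) : {set 'M[R]_2} :=
  [set M | [exists N, (M *m N == 1%:M) && (N *m M == 1%:M)]].

Lemma GLP (R : finNzRingType) (M : 'M[R]_2) : reflect (invertible2 M) (M \in GL R).
Proof.
rewrite inE; apply: (iffP existsP) => [[N /andP[/eqP h1 /eqP h2]]|[N [h1 h2]]].
  by exists N.
by exists N; rewrite h1 h2 !eqxx.
Qed.

Lemma GL_mul (R : finNzRingType) (g h : 'M[R]_2) :
  g \in GL R -> h \in GL R -> g *m h \in GL R.
Proof.
move=> /GLP[G [g1 g2]] /GLP[H [h1 h2]]; apply/GLP; exists (H *m G); split.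
  by rewrite mulmxA -(mulmxA g) h1 mulmx1 g1.
by rewrite mulmxA -(mulmxA H) g2 mulmx1 h2.
Qed.

Lemma GL1 (R : finNzRingType) : (1%:M : 'M[R]_2) \in GL R.
Proof. by apply/GLP; exists 1%:M; rewrite mulmx1. Qed.

Definition fib (R : finNzRingType) (p : {set R * R}) :=
  #|[set g in GL R | ccyc (row0 g) == p]|.

Lemma card_le_mapr (R : finNzRingType) (A B : {set 'M[R]_2}) (M N : 'M[R]_2) :
  M *m N = 1%:M -> (forall g, g \in A -> g *m M \in B) -> (#|A| <= #|B|)%N.
Proof.
move=> MN hAB; rewrite -(card_imset A (f := fun g => g *m M)).
  by apply: subset_leq_card; apply/subsetP => x /imsetP[g gA ->]; apply: hAB.
by move=> x y /(congr1 (mulmx^~ N)); rewrite -!mulmxA MN !mulmx1.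
Qed.

Lemma card_le_mapl (R : finNzRingType) (A B : {set 'M[R]_2}) (M N : 'M[R]_2) :
  N *m M = 1%:M -> (forall g, g \in A -> M *m g \in B) -> (#|A| <= #|B|)%N.
Proof.
move=> MN hAB; rewrite -(card_imset A (f := fun g => M *m g)).
  by apply: subset_leq_card; apply/subsetP => x /imsetP[g gA ->]; apply: hAB.
by move=> x y /(congr1 (mulmx N)); rewrite !mulmxA MN !mul1mx.
Qed.

Lemma row0_1 (R : finNzRingType) : row0 (1%:M : 'M[R]_2) = (1, 0).
Proof. by rewrite /row0 !mxE. Qed.

Lemma vm10 (R : finNzRingType) (M : 'M[R]_2) : vm (1, 0) M = row0 M.
Proof. by rewrite /vm /row0 /= !mul1r !mul0r !addr0. Qed.

Lemma fib_point (R : finNzRingType) (M : 'M[R]_2) :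
  M \in GL R -> fib (ccyc (row0 M)) = fib (ccyc ((1 : R), (0 : R))).
Proof.
move=> /[dup] MG /GLP[N [MN NM]]; apply/eqP; rewrite eqn_leq; apply/andP; split.
  apply: (card_le_mapr (M := N) (N := M)) => // g; rewrite in_set => /andP[gG /eqP gE]; rewrite in_set.
  rewrite GL_mul //=; last by apply/GLP; exists M.
  by rewrite row0_mul (ccyc_vm N gE) -row0_mul MN row0_1.
apply: (card_le_mapr (M := M) (N := N)) => // g; rewrite in_set => /andP[gG /eqP gE]; rewrite in_set.
rewrite GL_mul //= row0_mul.
by rewrite (ccyc_vm M gE) vm10.
Qed.

Lemma fib_chain (R : finNzRingType) (H : 'M[R]_2) (p : {set R * R}) :
  H \in GL R -> #|[set g in GL R | ccyc (vm (row0 H) g) == p]| = fib p.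
Proof.
move=> /[dup] HG /GLP[N [HN NH]]; apply/eqP; rewrite eqn_leq; apply/andP; split.
  apply: (card_le_mapl (M := H) (N := N)) => // g; rewrite in_set => /andP[gG /eqP gE]; rewrite in_set.
  by rewrite GL_mul //= row0_mul gE.
apply: (card_le_mapl (M := N) (N := H)) => // g; rewrite in_set => /andP[gG /eqP gE]; rewrite in_set.
rewrite GL_mul //=; last by apply/GLP; exists H.
by rewrite -row0_mul mulmxA HN mul1mx gE.
Qed.

Definition mk2 (R : finNzRingType) (a b c d : R) : 'M[R]_2 :=
  \matrix_(i, j) if i == 0 then (if j == 0 then a else b) else (if j == 0 then c else d).

Lemma ord2P (i : 'I_2) : i = 0 \/ i = 1.
Proof. by case: i => [[|[|i]] Hi]; [left|right|]; try apply: val_inj. Qed.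

Lemma mk2_mul (R : finNzRingType) (a b c d a' b' c' d' : R) :
  mk2 a b c d *m mk2 a' b' c' d' =
  mk2 (a*a' + b*c') (a*b' + b*d') (c*a' + d*c') (c*b' + d*d').
Proof.
apply/matrixP => i j; rewrite mulmx2E !mxE /=.
by case: (ord2P i) => ->; case: (ord2P j) => ->.
Qed.

Lemma mk2_1 (R : finNzRingType) : mk2 (1 : R) 0 0 1 = 1%:M.
Proof.
apply/matrixP => i j; rewrite !mxE /=.
by case: (ord2P i) => ->; case: (ord2P j) => ->.
Qed.

Lemma row0_mk2 (R : finNzRingType) (a b c d : R) : row0 (mk2 a b c d) = (a, b).
Proof. by rewrite /row0 !mxE. Qed.

Lemma GL_mk2 (R : finNzRingType) (a b c d a' b' c' d' : R) :
  mk2 a b c d *m mk2 a' b' c' d' = mk2 1 0 0 1 ->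
  mk2 a' b' c' d' *m mk2 a b c d = mk2 1 0 0 1 ->
  mk2 a b c d \in GL R.
Proof. by rewrite mk2_1 => h1 h2; apply/GLP; exists (mk2 a' b' c' d'). Qed.

Lemma GL_P1 (R : finNzRingType) (x : R) : mk2 1 x 0 1 \in GL R.
Proof.
apply: (GL_mk2 (a' := 1) (b' := -x) (c' := 0) (d' := 1)); rewrite mk2_mul;
  congr mk2; rewrite ?mul1r ?mulr1 ?mul0r ?mulr0 ?addr0 ?add0r ?subrr ?addNr //.
Qed.

Lemma GL_P2 (R : finNzRingType) (x : R) : mk2 x 1 1 0 \in GL R.
Proof.
apply: (GL_mk2 (a' := 0) (b' := 1) (c' := 1) (d' := -x)); rewrite mk2_mul;
  congr mk2; rewrite ?mul1r ?mulr1 ?mul0r ?mulr0 ?addr0 ?add0r ?subrr ?addNr ?mulrN //.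
Qed.

Lemma GL_swap (R : finNzRingType) : mk2 (0 : R) 1 1 0 \in GL R.
Proof.
apply: (GL_mk2 (a' := 0) (b' := 1) (c' := 1) (d' := 0)); rewrite mk2_mul;
  congr mk2; rewrite ?mul1r ?mulr1 ?mul0r ?mulr0 ?addr0 ?add0r //.
Qed.

Definition rep (K : finFieldType) (R : finNzRingType) (f : {rmorphism K -> R})
  (t : option K) : R * R :=
  if t is Some s then (1, f s) else (0, 1).

Lemma rep_row0 (K : finFieldType) (R : finNzRingType) (f : {rmorphism K -> R}) t :
  exists2 H, H \in GL R & rep f t = row0 H.
Proof.
case: t => [s|] /=.
  by exists (mk2 1 (f s) 0 1); [apply: GL_P1 | rewrite row0_mk2].
by exists (mk2 0 1 1 0); [apply: GL_swap | rewrite row0_mk2].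
Qed.

Lemma chain_rep (K : finFieldType) (R : finNzRingType) (f : {rmorphism K -> R})
  (g : 'M[R]_2) (p : {set R * R}) :
  in_chain f g p -> exists t, ccyc (vm (rep f t) g) = p.
Proof.
move=> [a [b [[M [[N [MN NM]] [Ma Mb]]] ->]]]; rewrite act_pointE.
have E0 : (ord0 : 'I_2) = 0 by apply: val_inj.
have E1 : (ord_max : 'I_2) = 1 by apply: val_inj.
rewrite E0 E1 in Ma Mb.
have [a0|an0] := eqVneq a 0.
  have bn0 : b != 0.
    apply/eqP => b0; have := congr1 (fun X : 'M[K]_2 => X 0 0) MN.
    by rewrite mulmx2E Ma Mb a0 b0 !mul0r addr0 mxE /= => /eqP; rewrite eq_sym oner_eq0.
  exists None => /=.
  have -> : (f a, f b) = (f b * ((0:R), (1:R)).1, f b * ((0:R), (1:R)).2) by rewrite /= a0 rmorph0 mulr0 mulr1.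
  rewrite vm_scale (ccyc_scale (s := f b^-1)) //.
  by rewrite -rmorphM mulVf // rmorph1.
exists (Some (b / a)) => /=.
have -> : (f a, f b) = (f a * ((1:R), f (b / a)).1, f a * ((1:R), f (b / a)).2).
  by rewrite /= mulr1 -rmorphM mulrC -mulrA mulVf // mulr1.
rewrite vm_scale (ccyc_scale (s := f a^-1)) //.
by rewrite -rmorphM mulVf // rmorph1.
Qed.

Lemma card_bigcup_le (T I : finType) (P : pred I) (F : I -> {set T}) :
  (#|\bigcup_(i | P i) F i| <= \sum_(i | P i) #|F i|)%N.
Proof.
apply: (big_rec2 (fun (A : {set T}) (n : nat) => (#|A| <= n)%N)); first by rewrite cards0.
move=> i A n _ IH; apply: leq_trans (leq_card_setU _ _) _.
by rewrite leq_add2l.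
Qed.

Lemma fib_is_point (R : finNzRingType) (p : {set R * R}) :
  is_point p -> fib p = fib (ccyc ((1 : R), (0 : R))).
Proof.
move=> [a [b [[M [/GLP MG [Ma Mb]]] ->]]].
have E0 : (ord0 : 'I_2) = 0 by apply: val_inj.
have E1 : (ord_max : 'I_2) = 1 by apply: val_inj.
rewrite E0 E1 in Ma Mb.
by rewrite -(fib_point MG) /ccyc /row0 /= Ma Mb.
Qed.

Lemma upper (K : finFieldType) (R : finNzRingType) (f : {rmorphism K -> R})
  (B : {set {set R * R}}) :
  blocking_set f B ->
  (#|GL R| <= #|B| * #|K|.+1 * fib (ccyc ((1%R : R), (0%R : R))))%N.
Proof.
move=> [Bpt Bch].
have sub : GL R \subset \bigcup_(p in B) \bigcup_(t : option K)
    [set g in GL R | ccyc (vm (rep f t) g) == p].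
  apply/subsetP => g gG; have [p pB /chain_rep [t tE]] := Bch g (elimT (GLP g) gG).
  apply/bigcupP; exists p => //; apply/bigcupP; exists t => //.
  by rewrite inE gG tE eqxx.
apply: leq_trans (subset_leq_card sub) _.
apply: leq_trans (card_bigcup_le _ _) _.
rewrite -mulnA -sum_nat_const; apply: leq_sum => p pB.
apply: leq_trans (card_bigcup_le _ _) _.
rewrite -card_option -sum_nat_const; apply: leq_sum => t _.
have [H HG ->] := rep_row0 f t.
by rewrite (fib_chain _ HG) (fib_is_point (Bpt p pB)).
Qed.

Definition Uset (R : finNzRingType) : {set R} :=
  [set x : R | [exists y : R, (x * y == 1) && (y * x == 1)]].

Definition Pts (R : finNzRingType) : {set {set R * R}} :=
  [set ccyc ((1 : R), x) | x : R] :|: [set ccyc (x, (1 : R)) | x in ~: Uset R].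

Lemma mem_ccyc_self (R : finNzRingType) (u : R * R) : u \in ccyc u.
Proof. by rewrite in_ccyc; apply/existsP; exists 1; rewrite !mul1r -surjective_pairing. Qed.

Lemma ccyc_eq (R : finNzRingType) (u v : R * R) :
  ccyc u = ccyc v -> exists r, v = (r * u.1, r * u.2).
Proof.
move=> E; have := mem_ccyc_self v; rewrite -E in_ccyc => /existsP[r /eqP ->].
by exists r.
Qed.

Lemma card_Pts (R : finNzRingType) : #|Pts R| = (#|R| + (#|R| - nunits R))%N.
Proof.
rewrite /Pts cardsU.
have -> : #|[set ccyc ((1 : R), x) | x : R] :&: [set ccyc (x, (1 : R)) | x in ~: Uset R]| = 0%N.
  apply/eqP; rewrite cards_eq0; apply/eqP/setP => p; rewrite !inE; apply/negP => /andP[/imsetP[x _ ->] /imsetP[y yU E]].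
  have [r [r1 r2]] := ccyc_eq E; have [s [s1 s2]] := ccyc_eq (esym E).
  move: r1 r2 s1 s2 => /= r1 r2 s1 s2; rewrite mulr1 in r1; rewrite mulr1 in s2.
  rewrite -r1 in r2; rewrite -s2 in s1.
  move: yU; rewrite inE /Uset inE => /negP; apply; apply/existsP; exists x.
  by apply/andP; split; apply/eqP.
rewrite subn0 !card_imset.
- by rewrite -(cardsC (Uset R)) addKn.
- move=> x y E; have [r [/= r1 r2]] := ccyc_eq E.
  by rewrite mulr1 in r2; rewrite r1 -r2 mul1r.
- move=> x y E; have [r [/= r1 r2]] := ccyc_eq E.
  by rewrite mulr1 in r1; rewrite r2 -r1 mul1r.
Qed.

Lemma fib_Pts (R : finNzRingType) (p : {set R * R}) :
  p \in Pts R -> fib p = fib (ccyc ((1 : R), (0 : R))).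
Proof.
rewrite inE => /orP[/imsetP[x _ ->]|/imsetP[x _ ->]].
  by rewrite -(fib_point (GL_P1 x)) row0_mk2.
by rewrite -(fib_point (GL_P2 x)) row0_mk2.
Qed.

Lemma lower (R : finNzRingType) :
  (#|Pts R| * fib (ccyc ((1%R : R), (0%R : R))) <= #|GL R|)%N.
Proof.
rewrite -sum_nat_const.
rewrite (eq_bigr (@fib R)); last by move=> p /fib_Pts.
pose h (g : 'M[R]_2) := ccyc (row0 g).
have -> : (\sum_(p in Pts R) fib p =
    \sum_(g | (g \in GL R) && (h g \in Pts R)) 1)%N.
  rewrite (partition_big h (mem (Pts R))) //=; last by move=> g /andP[].
  apply: eq_bigr => p pP; rewrite /fib -sum1_card.
  apply: eq_bigl => g; rewrite inE /h.
  by case: eqP => [->|]; rewrite ?pP ?andbT ?andbF.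
rewrite (_ : (\sum_(g in GL R | h g \in Pts R) 1)%N = #|[set g in GL R | h g \in Pts R]|).
  by apply: subset_leq_card; apply/subsetP => g; rewrite inE => /andP[].
by rewrite -sum1_card; apply: eq_bigl => g; rewrite inE.
Qed.

Lemma card_R (K : finFieldType) (R : finNzRingType) (f : {rmorphism K -> R}) (d : nat) :
  left_dim f d -> #|R| = (#|K| ^ d)%N.
Proof.
move=> [s [span indep]].
pose phi (c : {ffun 'I_d -> K}) : R := \sum_(i < d) f (c i) * tnth s i.
have phi_inj : injective phi.
  move=> c c' E; apply/ffunP => i; apply/eqP; rewrite -subr_eq0; apply/eqP.
  apply: (indep (fun i => c i - c' i)).
  under eq_bigr do rewrite rmorphB mulrBl.
  by rewrite sumrB -/(phi c) -/(phi c') E subrr.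
rewrite -cardsT.
have -> : [set: R] = [set phi c | c in [set: {ffun 'I_d -> K}]].
  apply/setP => x; rewrite !inE; apply/esym/imsetP.
  have [c ->] := span x; exists (finfun c) => //.
  by rewrite /phi; apply: eq_bigr => i _; rewrite ffunE.
by rewrite card_imset // cardsT card_ffun card_ord.
Qed.

Lemma nunits_le (R : finNzRingType) : (nunits R <= #|R|)%N.
Proof. exact: max_card. Qed.

Lemma fib0_pos (R : finNzRingType) : (0 < fib (ccyc ((1%R : R), (0%R : R))))%N.
Proof.
apply/card_gt0P; exists 1%:M; rewrite inE GL1 /=.
by rewrite row0_1.
Qed.

From mathcomp Require Import zify.

Theorem mainTheorem2 (K : finFieldType) (R : finNzRingType)
  (f : {rmorphism K -> R}) (q d : nat) (B : {set {set R * R}}) :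
  #|K| = q -> left_dim f d -> blocking_set f B ->
  (Num.ceil (((2 * (q ^ d)%:Z - (nunits R)%:Z)%:~R : rat) / (q.+1)%:R)
     <= (#|B|)%:Z)%R.
Proof.
move=> Kq Hd Hb.
have key : (#|Pts R| <= #|B| * #|K|.+1)%N.
  by rewrite -(leq_pmul2r (fib0_pos R)); apply: leq_trans (lower R) (upper Hb).
have nle := nunits_le R.
rewrite card_Pts (card_R Hd) Kq in key; rewrite (card_R Hd) Kq in nle.
rewrite ceil_le_int ler_pdivrMr ?ltr0n //.
rewrite -[(q.+1)%:R]/((q.+1)%:Z)%:~R -intrM ler_int.
lia.
Qed.
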